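(* $\bigcup_k\mathfrak{L}(\mathrm{rtDVA}(k))\subseteq\mathsf{TISP}(n^3,n)$.
   Context: $\mathfrak{L}(A)$ denotes the class of languages recognized by machines of type $A$; the union ranges over $k\ge1$. $\mathsf{TISP}(n^3,n)$ is the class of languages decidable by a deterministic Turing machine that simultaneously uses time $O(n^3)$ and space $O(n)$ on inputs of length $n$. A real-time deterministic vector automaton of dimension $k$ ($\mathrm{rtDVA}(k)$) is a 6-tuple $(Q,\Sigma,\delta,q_0,Q_a,v)$ with finite state set $Q$, initial state $q_0$, accept states $Q_a$, initial row vector $v\in\mathbb{Q}^k$ (freely chosen), and $\delta:Q\times(\Sigma\cup\{\cent,\$\})\times\{=,\neq\}\to Q\times S$, $S$ the set of $k\times k$ rational matrices. The input $w$ is read as $\cent w\$$ left to right, one symbol per step; in state $q$ reading $\sigma$, with $\omega$ equal to ''$=$'' iff the first vector entry equals $1$, if $\delta(q,\sigma,\omega)=(q',M)$ the machine goes to $q'$ and multiplies its row vector on the right by $M$. Acceptance: after processing $\$$, the state is in $Q_a$ and the first vector entry equals $1$. *)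

(* Defs.v *)
From mathcomp Require Import all_boot all_order all_algebra.
Set Implicit Arguments. Unset Strict Implicit. Unset Printing Implicit Defensive.
Import GRing.Theory Num.Theory.
Local Open Scope ring_scope.

Inductive tsym (Sigma : Type) := Cent | Dollar | Letter of Sigma.
Arguments Cent {Sigma}. Arguments Dollar {Sigma}.

(* rtDVA of dimension k.  The boolean argument of the transition is
   omega: true  <-> "=" (first vector entry equals 1). *)
Record rtDVA (Sigma : Type) (k : nat) := {
  dQ : finType;
  ddelta : dQ -> tsym Sigma -> bool -> dQ * 'M[rat]_k;
  dq0 : dQ;
  dacc : {pred dQ};
  dv : 'rV[rat]_k
}.

Section DVA.
Variables (Sigma : Type) (k : nat) (A : rtDVA Sigma k.+1).

Definition first_entry (v : 'rV[rat]_k.+1) : rat := v ord0 ord0.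

Definition dva_step (c : dQ A * 'rV[rat]_k.+1) (s : tsym Sigma)
  : dQ A * 'rV[rat]_k.+1 :=
  let: (q, v) := c in
  let: (q', M) := ddelta q s (first_entry v == 1) in (q', v *m M).

Definition dva_run (w : seq Sigma) : dQ A * 'rV[rat]_k.+1 :=
  foldl dva_step (dq0 A, dv A) (Cent :: rcons (map (@Letter Sigma) w) Dollar).

Definition dva_lang (w : seq Sigma) : Prop :=
  let: (q, v) := dva_run w in (q \in @dacc Sigma k.+1 A) /\ first_entry v = 1.
End DVA.

Inductive move := MLeft | MStay | MRight.

Record DTM (Sigma : Type) := {
  tQ : finType;
  tG : finType;
  ntapes : nat;
  tblank : tG;
  tinput : Sigma -> tG;
  tstart : tQ;
  tacc : tQ;
  trej : tQ;
  tdelta : tQ -> ('I_ntapes -> tG) -> tQ * ('I_ntapes -> tG) * ('I_ntapes -> move)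
}.

Section TM.
Variables (Sigma : Type) (M : DTM Sigma).

Record config := Config {
  cstate : tQ M;
  ctape : 'I_(ntapes M) -> int -> tG M;
  cpos : 'I_(ntapes M) -> int
}.

Definition halting (q : tQ M) : bool := (q == tacc M) || (q == trej M).

Definition move_int (m : move) : int :=
  match m with MLeft => -1 | MStay => 0 | MRight => 1 end.

Definition tm_step (c : config) : config :=
  if halting (cstate c) then c else
  let: (q', wr, mv) := tdelta (cstate c) (fun i => ctape c i (cpos c i)) in
  Config q'
    (fun i z => if z == cpos c i then wr i else ctape c i z)
    (fun i => cpos c i + move_int (mv i)).

Definition tm_init (w : seq Sigma) : config :=
  Config (tstart M)
    (fun i z => if (val i == 0)%N then
                  match z with
                  | Posz j => if (j < size w)%N then
                                 match nth None (map Some w) j with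
                                 | Some a => tinput M a | None => tblank M end
                               else tblank M
                  | Negz _ => tblank M
                  end
                else tblank M)
    (fun _ => 0).

Definition tm_run (w : seq Sigma) (t : nat) : config := iter t tm_step (tm_init w).

Definition decides_in (L : seq Sigma -> Prop) (T S : nat -> nat) : Prop :=
  forall w, exists t, (t <= T (size w))%N /\ halting (cstate (tm_run w t)) /\
    (cstate (tm_run w t) = tacc M <-> L w) /\
    (forall t' i, (t' <= t)%N -> (`|cpos (tm_run w t') i| <= S (size w))%N).
End TM.

Definition TISP_n3_n (Sigma : Type) (L : seq Sigma -> Prop) : Prop :=
  exists (M : DTM Sigma) (c : nat),
    decides_in M L (fun n => c * n ^ 3 + c)%N (fun n => c * n + c)%N.

(* Main.v *)
From HB Require Import structures.
Require Import Defs.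
From mathcomp Require Import all_boot all_order all_algebra.
From mathcomp Require Import zify ring lra.
Set Implicit Arguments. Unset Strict Implicit. Unset Printing Implicit Defensive.
Import Order.TTheory GRing.Theory Num.Theory.

Lemma big_opt (R : nmodType) (T : finType) (F : option T -> R) :
  (\sum_(x : option T) F x = F None + \sum_(x : T) F (Some x))%R.
Proof.
rewrite (bigD1 None) //=; congr (_ + _)%R.
rewrite (reindex_omap Some (fun x => x)) /=; last by case.
by apply: eq_bigl => x; rewrite eqxx.
Qed.

Section Sim.
Variables (Sigma : finType) (k : nat) (A : rtDVA Sigma k.+1).
Local Open Scope ring_scope.

Definition code := option (option Sigma).
Definition dec (s : code) : tsym Sigma :=
  match s with None => Cent | Some None => Dollar | Some (Some a) => Letter a end.
Definition coord := option (option 'I_k.+1).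
Definition cX (i : 'I_k.+1) : coord := Some (Some i).
Definition cE : coord := Some None.

Definition Op := (dQ A * code * bool)%type.
Definition Mq (o : Op) : 'M[rat]_k.+1 := (ddelta o.1.1 (dec o.1.2) o.2).2.
Definition Ent := (Op * 'I_k.+1 * 'I_k.+1 + 'I_k.+1)%type.
Definition entry (e : Ent) : rat :=
  match e with inl (o, i, j) => Mq o i j | inr j => dv A ord0 j end.
Definition Dn : nat := (\prod_(e : Ent) `|denq (entry e)|)%N.
Definition Zint (x : rat) : int := numq x * (Dn %/ `|denq x|)%N%:Z.

Definition Nb (o : Op) (c' c : coord) : int :=
  match c, c' with
  | Some (Some j), Some (Some i) => Zint (Mq o i j)
  | Some None, Some None => Dn%:Z
  | _, _ => 0 end.
Definition Nm (o : Op) (c' c : coord) : int :=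
  match c with None => Nb o c' (cX ord0) - Nb o c' cE | _ => Nb o c' c end.
Definition fmap (o : Op) (d : coord -> int) (c : coord) : int :=
  \sum_(c' : coord) d c' * Nm o c' c.

Definition U0b (c : coord) : int :=
  match c with Some (Some j) => Zint (dv A ord0 j) | Some None => Dn%:Z | None => 0 end.
Definition U0 (c : coord) : int :=
  match c with None => U0b (cX ord0) - U0b cE | _ => U0b c end.

Definition S : nat := (\max_(o : Op) \max_(c : coord) \sum_(c' : coord) `|Nm o c' c|).+1.
Definition M0 : nat := (\max_(c : coord) `|U0 c|).+1.
Definition Bm : nat := (S * S * M0)%N.
Definition B : nat := Bm.+2.
Definition Cb : nat := (S * M0)%N.
Definition Kc : nat := (Cb.*2).+1.
Definition encC (z : int) : 'I_Kc := inord `|z + Cb%:Z|.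
Definition decC (o : 'I_Kc) : int := (o : nat)%:Z - Cb%:Z.

Definition Sym := (code * {ffun coord -> 'I_B})%type.
Definition zd : {ffun coord -> 'I_B} := [ffun => ord0].

Inductive St :=
| SW of dQ A & code & bool & bool & {ffun coord -> 'I_Kc}
| RW of dQ A & bool & option code
| FD of dQ A & bool
| HA | HR.

Definition StE := ((dQ A * code * bool * bool * {ffun coord -> 'I_Kc}) +
                   (dQ A * bool * option code) + (dQ A * bool) + bool)%type.
Definition encS (s : St) : StE :=
  match s with
  | SW q s om fl ka => inl (inl (inl (q, s, om, fl, ka)))
  | RW q fl nx => inl (inl (inr (q, fl, nx)))
  | FD q fl => inl (inr (q, fl))
  | HA => inr true | HR => inr false end.
Definition decS (x : StE) : option St := Some
  match x with
  | inl (inl (inl (q, s, om, fl, ka))) => SW q s om fl ka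
  | inl (inl (inr (q, fl, nx))) => RW q fl nx
  | inl (inr (q, fl)) => FD q fl
  | inr true => HA | inr false => HR end.
Lemma encSK : pcancel encS decS. Proof. by case. Qed.
HB.instance Definition _ := Finite.copy St (pcan_type encSK).

Definition digs (x : {ffun coord -> 'I_B}) (c : coord) : int := (x c : nat)%:Z.

Definition endst (q : dQ A) (s : code) (om fl : bool) : St :=
  let q' := (ddelta q (dec s) om).1 in
  if s == Some None then (if (q' \in @dacc Sigma k.+1 A) && fl then HA else HR) else RW q' fl None.

Definition tval (o : Op) (ds : {ffun coord -> 'I_B}) (ka : {ffun coord -> 'I_Kc}) c : int :=
  fmap o (digs ds) c + decC (ka c).

Definition ndf (o : Op) ds ka : {ffun coord -> 'I_B} :=
  [ffun c => inord `|(tval o ds ka c %% B%:Z)%Z| ].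
Definition nkf (o : Op) ds ka : {ffun coord -> 'I_Kc} :=
  [ffun c => encC (tval o ds ka c %/ B%:Z)%Z].

Definition del (st : St) (x : Sym) : St * Sym * move :=
  let: (mk, ds) := x in
  match st with
  | SW q s om fl ka =>
      let o : Op := (q, s, om) in
      let nd := ndf o ds ka in
      let nk := nkf o ds ka in
      let fl' := fl && (nd None == ord0) in
      match mk with
      | None => (endst q s om fl', (mk, nd), MLeft)
      | _ => (SW q s om fl' nk, (mk, nd), MRight)
      end
  | RW q fl nx =>
      match mk with
      | None => (match nx with None => FD q fl | Some s => SW q s fl true [ffun => encC 0] end,
                 x, MRight)
      | _ => (RW q fl nx, x, MLeft)
      end
  | FD q fl =>
      match mk with
      | None => (RW q fl (Some (Some None)), x, MLeft)
      | Some None => (FD q fl, x, MRight)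
      | Some (Some a) => (RW q fl (Some (Some (Some a))), (Some None, ds), MLeft)
      end
  | HA | HR => (st, x, MStay)
  end.

Definition om0 : bool := first_entry (dv A) == 1.
Definition o0 : Op := (dq0 A, None, om0).
Definition st0 : St := SW (dq0 A) None om0 true [ffun c => encC (fmap o0 U0 c)].

Definition TM : DTM Sigma := {|
  tQ := St; tG := (Sym : finType); ntapes := 1; tblank := (None, zd);
  tinput := fun a => (Some (Some a), zd);
  tstart := st0; tacc := HA; trej := HR;
  tdelta := fun s r => let: (s', y, mv) := del s (r ord0) in (s', fun _ => y, fun _ => mv) |}.


Definition Cfg (c : config TM) (s : St) (T : int -> Sym) (p : int) :=
  cstate c = s /\ (forall i, cpos c i = p) /\ (forall i z, ctape c i z = T z).

Lemma Cfg_ext c s T T' p : Cfg c s T p -> (forall z, T z = T' z) -> Cfg c s T' p.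
Proof. by case=> [H1 [H2 H3]] H; split=> //; split=> // i z; rewrite H3. Qed.

Lemma stepE c s T p s' y mv : Cfg c s T p -> ~~ halting (M := TM) s ->
  del s (T p) = (s', y, mv) ->
  Cfg (tm_step c) s' (fun z => if z == p then y else T z) (p + move_int mv).
Proof.
case: c => cs ct cp [/= -> [Hp Ht]] Hh Hd.
rewrite /tm_step /= (negbTE Hh) /= Hp Ht Hd /=.
split=> //; split=> [i|i z] /=; by rewrite ?Hp ?Ht.
Qed.

Lemma stepH c s T p : Cfg c s T p -> halting (M := TM) s -> tm_step c = c.
Proof. by case: c => cs ct cp [/= -> _] Hh; rewrite /tm_step /= Hh. Qed.

Lemma nhSW q s om fl ka : ~~ halting (M := TM) (SW q s om fl ka).
Proof. by []. Qed.
Lemma nhRW q fl nx : ~~ halting (M := TM) (RW q fl nx).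
Proof. by []. Qed.
Lemma nhFD q fl : ~~ halting (M := TM) (FD q fl).
Proof. by []. Qed.

Lemma decCK z : `|z| <= Cb%:Z -> decC (encC z) = z.
Proof.
move=> Hz; rewrite /decC /encC inordK.
  rewrite abszE ger0_norm; first by rewrite addrK.
  by move: Hz; rewrite ler_norml; lia.
rewrite /Kc ltnS -(@ler_nat int) natz abszE.
by move: Hz; rewrite ler_norml => /andP [H1 H2]; rewrite ger0_norm ?natz; lia.
Qed.


Lemma S_gt0 : (0 < S)%N. Proof. by []. Qed.
Lemma M0_gt0 : (0 < M0)%N. Proof. by []. Qed.

Lemma sumN_le o c : \sum_(c' : coord) `|Nm o c' c| <= S%:Z.
Proof.
have H : (\sum_(c' : coord) `|Nm o c' c| <= S)%N.
  apply: leqW; apply: leq_trans (leq_bigmax o).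
  exact: (leq_bigmax (F := fun c => \sum_(c' : coord) `|Nm o c' c|)%N c).
rewrite (eq_bigr (fun c' => (`|Nm o c' c|%N)%:R)); last by move=> c' _; rewrite natz abszE.
by rewrite -natr_sum natz lez_nat.
Qed.

Lemma fmap_bound o d (X : int) c : (forall c', `|d c'| <= X) -> `|fmap o d c| <= X * S%:Z.
Proof.
move=> H; have X0 : 0 <= X by apply: le_trans (H None).
apply: (le_trans (ler_norm_sum _ _ _)).
apply: (@le_trans _ _ (\sum_(c' : coord) X * `|Nm o c' c|)).
  apply: ler_sum => c' _; rewrite normrM; exact: (ler_wpM2r (normr_ge0 (Nm o c' c)) (H c')).
by rewrite -mulr_sumr; exact: (ler_wpM2l X0 (sumN_le o c)).
Qed.

Lemma fmap_ext o d1 d2 c : (forall c', d1 c' = d2 c') -> fmap o d1 c = fmap o d2 c.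
Proof. by move=> H; apply: eq_bigr => c' _; rewrite H. Qed.

Lemma fmapD o d1 d2 c : fmap o (fun c' => d1 c' + d2 c') c = fmap o d1 c + fmap o d2 c.
Proof. by rewrite /fmap -big_split; apply: eq_bigr => c' _; rewrite mulrDl. Qed.

Lemma fmapZ o d a c : fmap o (fun c' => d c' * a) c = fmap o d c * a.
Proof. by rewrite /fmap mulr_suml; apply: eq_bigr => c' _; rewrite mulrAC. Qed.

Lemma fmap_sum o N (F : 'I_N -> coord -> int) c :
  fmap o (fun c' => \sum_(i < N) F i c') c = \sum_(i < N) fmap o (F i) c.
Proof.
rewrite /fmap exchange_big /=; apply: eq_bigr => c' _; by rewrite mulr_suml.
Qed.

Lemma B_gt1 : (1 < B)%N. Proof. by []. Qed.

Lemma Cb_ge_S : (S <= Cb)%N.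
Proof. by rewrite /Cb leq_pmulr. Qed.

Lemma carry_bd (t : int) : `|t| <= (B%:Z - 1) * S%:Z + Cb%:Z -> `|(t %/ B%:Z)%Z| <= Cb%:Z.
Proof.
move=> Ht.
have E := divz_eq t B%:Z.
have m0 : 0 <= (t %% B%:Z)%Z by apply: modz_ge0.
have m1 : (t %% B%:Z)%Z < B%:Z by apply: ltz_pmod.
have HS : (S%:Z <= Cb%:Z) by rewrite lez_nat Cb_ge_S.
have HB : 2 <= B%:Z by rewrite lez_nat.
move: Ht; rewrite !ler_norml => /andP [Ht1 Ht2].
set q := (t %/ B%:Z)%Z in E *; set r := (t %% B%:Z)%Z in E m0 m1 *.
have S0 : 0 <= S%:Z by [].
apply/andP; split; nia.
Qed.


Lemma digitE (t : int) : ((inord `|(t %% B%:Z)%Z| : 'I_B) : nat)%:Z = (t %% B%:Z)%Z.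
Proof.
have m0 : 0 <= (t %% B%:Z)%Z by apply: modz_ge0.
have m1 : (t %% B%:Z)%Z < B%:Z by apply: ltz_pmod.
rewrite inordK; first by rewrite abszE ger0_norm.
by rewrite -(@ltr_nat int) !natz abszE ger0_norm.
Qed.

Lemma digs_bd (ds : {ffun coord -> 'I_B}) c : `|digs ds c| <= B%:Z - 1.
Proof.
rewrite /digs ger0_norm //; have := ltn_ord (ds c); lia.
Qed.

Lemma tval_bd o ds (ka : {ffun coord -> 'I_Kc}) (c : coord) : (forall c : coord, `|decC (ka c)| <= Cb%:Z) ->
  `|tval o ds ka c| <= (B%:Z - 1) * S%:Z + Cb%:Z.
Proof.
move=> H; rewrite /tval; apply: (le_trans (ler_normD _ _)); apply: lerD (H c).
by apply: fmap_bound => c'; exact: digs_bd.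
Qed.

Lemma Cfg_pos c s T p p' : Cfg c s T p -> p = p' -> Cfg c s T p'.
Proof. by move=> H <-. Qed.

Lemma sweep (n : nat) q s om : forall m p fl ka T c, (p + m)%N = n ->
  Cfg c (SW q s om fl ka) T (Posz p) ->
  (forall j, (p <= j < n)%N -> (T (Posz j)).1 != None) ->
  (T (Posz n)).1 = None ->
  (forall c, `|decC (ka c)| <= Cb%:Z) ->
  exists (T' : int -> Sym) (kf : coord -> int),
   Cfg (iter m.+1 (@tm_step _ TM) c)
     (endst q s om (fl && (\sum_(i < m.+1) (T' (Posz (p + i))).2 None * B ^ i == 0)%N))
     T' (Posz n - 1) /\
   (forall z : int, (z < Posz p) || (Posz n < z) -> T' z = T z) /\
   (forall z, (T' z).1 = (T z).1) /\
   (forall c, \sum_(i < m.+1) digs (T' (Posz (p + i))).2 c * (B%:Z) ^+ i + kf c * (B%:Z) ^+ m.+1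
        = \sum_(i < m.+1) fmap (q, s, om) (digs (T (Posz (p + i))).2) c * (B%:Z) ^+ i
          + decC (ka c)).
Proof.
elim=> [|m IH] p fl ka T c Hpm Hc Hmk Hn Hka.
- rewrite addn0 in Hpm; subst p.
  case HT: (T (Posz n)) => [mk ds]; rewrite HT /= in Hn; subst mk.
  set nd := ndf (q, s, om) ds ka.
  have Hd : del (SW q s om fl ka) (T (Posz n)) =
     (endst q s om (fl && (nd None == ord0)), (None, nd), MLeft) by rewrite HT.
  have Hc1 := stepE Hc (nhSW _ _ _ _ _) Hd.
  exists (fun z => if z == Posz n then (None, nd) else T z).
  exists (fun c => (tval (q, s, om) ds ka c %/ B%:Z)%Z).
  split; [|split; [|split]].
  + rewrite /= big_ord1 addn0 eqxx /= expn0 muln1.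
    have -> : ((nd None : nat) == 0%N) = (nd None == ord0) by [].
    by apply: (Cfg_pos (Cfg_ext Hc1 _)).
  + move=> z /orP [] H; case: eqP => // Ez; move: H; rewrite Ez ltxx //.
  + by move=> z; case: eqP => // ->; rewrite HT.
  + move=> c0; rewrite !big_ord1 !addn0 eqxx HT /= !expr0 !mulr1 expr1.
    rewrite /digs ffunE digitE.
    by rewrite addrC -divz_eq /tval.
- have Hp : (p < n)%N by rewrite -Hpm addnS ltnS leq_addr.
  case HT: (T (Posz p)) => [mk ds].
  have Hmkp : mk != None by have := Hmk p; rewrite leqnn Hp HT /=; apply.
  set nd := ndf (q, s, om) ds ka; set nk := nkf (q, s, om) ds ka.
  have Hd : del (SW q s om fl ka) (T (Posz p)) =
     (SW q s om (fl && (nd None == ord0)) nk, (mk, nd), MRight) by rewrite HT; case: mk Hmkp HT.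
  have Hc1 := stepE Hc (nhSW _ _ _ _ _) Hd.
  set T1 := (fun z : int => if z == Posz p then (mk, nd) else T z) in Hc1.
  have Hka1 : forall c, decC (nk c) = (tval (q, s, om) ds ka c %/ B%:Z)%Z.
    by move=> c0; rewrite ffunE decCK // carry_bd // tval_bd.
  have S1 : (p.+1 + m)%N = n by rewrite addSnnS.
  have S2 : Cfg (tm_step c) (SW q s om (fl && (nd None == ord0)) nk) T1 (Posz p.+1).
    by apply: (Cfg_pos Hc1); rewrite /= -addn1 PoszD.
  have S3 : forall j, (p.+1 <= j < n)%N -> (T1 (Posz j)).1 != None.
    move=> j /andP [Hj1 Hj2]; rewrite /T1.
    have [[E]|NE] := eqVneq (Posz j) (Posz p); first by move: Hj1; rewrite E ltnn.
    by apply: Hmk; rewrite Hj2 ltnW.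
  have S4 : (T1 (Posz n)).1 = None.
    rewrite /T1; have [[E]|NE] := eqVneq (Posz n) (Posz p); first by move: Hp; rewrite E ltnn.
    by rewrite ?(negbTE NE).
  have S5 : forall c, `|decC (nk c)| <= Cb%:Z.
    by move=> c0; rewrite Hka1 carry_bd // tval_bd.
  have [T' [kf [H1 [H2 [H3 H4]]]]] := IH p.+1 (fl && (nd None == ord0)) nk T1 (tm_step c) S1 S2 S3 S4 S5.
  + exists T', kf; rewrite iterSr.
    have ET'p : T' (Posz p) = (mk, nd).
      by rewrite H2 ?/T1 ?eqxx // ltz_nat ltnSn.
    split; [|split; [|split]].
    * have -> : (fl && ((\sum_(i < m.+2) (T' (Posz (p + i))).2 None * B ^ i)%N == 0%N))
         = ((fl && (nd None == ord0)) &&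
            ((\sum_(i < m.+1) (T' (Posz (p.+1 + i))).2 None * B ^ i)%N == 0%N)).
        rewrite big_ord_recl /= addn0 ET'p /= expn0 muln1.
        have -> : (\sum_(i < m.+1) (T' (Posz (p + bump 0 i))).2 None * B ^ bump 0 i =
                  B * \sum_(i < m.+1) (T' (Posz (p.+1 + i))).2 None * B ^ i)%N.
          rewrite big_distrr; apply: eq_bigr => i _ /=.
          by rewrite /bump add1n addSnnS expnS mulnCA.
        by rewrite addn_eq0 muln_eq0 /= -andbA.
      by apply: (Cfg_pos (Cfg_ext H1 _)).
    * move=> z Hz; rewrite H2; last first.
        move: Hz => /orP [H|H]; apply/orP; [left|right] => //.
        by apply: (lt_trans H); rewrite ltz_nat.
      rewrite /T1; have [Ez|] := eqVneq z (Posz p) => //.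
      by move: Hz; rewrite Ez ltxx /= ltz_nat ltnNge (ltnW Hp).
    * by move=> z; rewrite H3 /T1; have [->|] := eqVneq z (Posz p) => //=; rewrite HT.
    * move=> c0; rewrite big_ord_recl [in RHS]big_ord_recl /= !addn0 ET'p HT /= !expr0 !mulr1.
      have E1 : forall (F : nat -> int), \sum_(i < m.+1) F (p + bump 0 i)%N * (B%:Z) ^+ bump 0 i
               = B%:Z * \sum_(i < m.+1) F (p.+1 + i)%N * (B%:Z) ^+ i.
        move=> F; rewrite mulr_sumr; apply: eq_bigr => i _ /=.
        by rewrite /bump add1n addSnnS exprS mulrCA.
      have := E1 (fun j => digs (T' (Posz j)).2 c0); rewrite /= => ->.
      have := E1 (fun j => fmap (q, s, om) (digs (T (Posz j)).2) c0); rewrite /= => ->.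
      rewrite exprS mulrCA -addrA -mulrDr H4 Hka1.
      have -> : \sum_(i < m.+1) fmap (q, s, om) (digs (T1 (Posz (p.+1 + i))).2) c0 * (B%:Z) ^+ i
              = \sum_(i < m.+1) fmap (q, s, om) (digs (T (Posz (p.+1 + i))).2) c0 * (B%:Z) ^+ i.
        apply: eq_bigr => i _; rewrite /T1; have [E|] := eqVneq (Posz (p.+1 + i)) (Posz p) => //.
        by move: E => [] /eqP; rewrite -{2}[p]addn0 addSnnS eqn_add2l.
      rewrite /digs ffunE digitE mulrDr addrA [X in X + _]addrC.
      have E : (tval (q,s,om) ds ka c0 %% B%:Z)%Z + B%:Z * (tval (q,s,om) ds ka c0 %/ B%:Z)%Z
               = fmap (q,s,om) (digs ds) c0 + decC (ka c0) by rewrite addrC mulrC -divz_eq.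
      move: E; rewrite /digs => E; rewrite -addrA E; ring.
Qed.


Definition nextst q fl (nx : option code) : St :=
  match nx with None => FD q fl | Some s => SW q s fl true [ffun => encC 0] end.

Lemma rewind q fl nx : forall m T c, Cfg c (RW q fl nx) T (Posz m - 1) ->
  (forall j, (j < m)%N -> (T (Posz j)).1 != None) -> (T (-1)).1 = None ->
  Cfg (iter m.+1 (@tm_step _ TM) c) (nextst q fl nx) T 0.
Proof.
elim=> [|m IH] T c Hc Hmk Hn.
- case HT: (T (-1)) => [mk ds]; rewrite HT /= in Hn; subst mk.
  have Hd : del (RW q fl nx) (T (Posz 0 - 1)) = (nextst q fl nx, T (-1), MRight) by rewrite HT.
  have Hc1 := stepE Hc (nhRW _ _ _) Hd.
  apply: (Cfg_pos (Cfg_ext Hc1 _)) => // z.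
  by case: eqP => // ->.
- case HT: (T (Posz m)) => [mk ds].
  have Hmkp : mk != None by have := Hmk m (ltnSn m); rewrite HT.
  have Hd : del (RW q fl nx) (T (Posz m.+1 - 1)) = (RW q fl nx, T (Posz m), MLeft).
    have -> : Posz m.+1 - 1 = Posz m by rewrite -addn1 PoszD addrK.
    by rewrite HT; case: mk Hmkp HT.
  have Hc1 := stepE Hc (nhRW _ _ _) Hd.
  rewrite iterSr; apply: IH => //.
  + apply: (Cfg_pos (Cfg_ext Hc1 _)).
      move=> z; case: eqP => // ->; by rewrite -addn1 PoszD addrK.
    by rewrite /= -addn1 PoszD addrK.
  + by move=> j Hj; apply: Hmk; rewrite ltnS ltnW.
Qed.

Definition markOf (a : option Sigma) : code :=
  match a with Some x => Some (Some x) | None => None end.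

Definition Tfd (T : int -> Sym) (m : nat) (a : option Sigma) (z : int) : Sym :=
  if z == Posz m then (if a is Some _ then (Some None, (T z).2) else T z) else T z.

Lemma find q fl (m : nat) (a : option Sigma) T :
  (forall j, (j < m)%N -> (T (Posz j)).1 = Some None) -> (T (Posz m)).1 = markOf a ->
  forall d j c, (j + d = m)%N -> Cfg c (FD q fl) T (Posz j) ->
  Cfg (iter d.+1 (@tm_step _ TM) c) (RW q fl (Some (Some a))) (Tfd T m a) (Posz m - 1).
Proof.
move=> Hdone Hm; elim=> [|d IH] j c Hjd Hc.
- rewrite addn0 in Hjd; subst j.
  case HT: (T (Posz m)) => [mk ds]; rewrite HT /= in Hm; subst mk.
  case: a HT => [x|] HT.
  + have Hd : del (FD q fl) (T (Posz m)) = (RW q fl (Some (Some (Some x))), (Some None, ds), MLeft)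
      by rewrite HT.
    have Hc1 := stepE Hc (nhFD _ _) Hd.
    apply: (Cfg_pos (Cfg_ext Hc1 _)) => // z.
    by rewrite /Tfd; case: eqP => // ->; rewrite HT.
  + have Hd : del (FD q fl) (T (Posz m)) = (RW q fl (Some (Some None)), T (Posz m), MLeft)
      by rewrite HT.
    have Hc1 := stepE Hc (nhFD _ _) Hd.
    apply: (Cfg_pos (Cfg_ext Hc1 _)) => // z.
    by rewrite /Tfd; case: eqP => // ->.
- have Hj : (j < m)%N by rewrite -Hjd addnS ltnS leq_addr.
  case HT: (T (Posz j)) => [mk ds].
  have Hmk : mk = Some None by have := Hdone j Hj; rewrite HT.
  have Hd : del (FD q fl) (T (Posz j)) = (FD q fl, T (Posz j), MRight) by rewrite HT Hmk.
  have Hc1 := stepE Hc (nhFD _ _) Hd.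
  rewrite iterSr; apply: (IH j.+1); first by rewrite addSnnS.
  apply: (Cfg_pos (Cfg_ext Hc1 _)); first by move=> z; case: eqP => // ->.
  by rewrite /= -addn1 PoszD.
Qed.


Lemma Dn_gt0 : (0 < Dn)%N.
Proof. apply: prodn_gt0 => e; by rewrite absz_gt0 gt_eqF // denq_gt0. Qed.

Lemma dvd_Dn e : (`|denq (entry e)| %| Dn)%N.
Proof. by rewrite /Dn (bigD1 e) //= dvdn_mulr. Qed.

Lemma Zint_ok (x : rat) : (`|denq x| %| Dn)%N -> (Zint x)%:~R = Dn%:R * x :> rat.
Proof.
move=> H; rewrite /Zint intrM.
have dpos : (0 < denq x) by apply: denq_gt0.
set d := `|denq x|%N.
have Ed : (denq x)%:~R = d%:R :> rat.
  by rewrite /d -[in LHS](gez0_abs (ltW dpos)).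
have dnz : d%:R != 0 :> rat.
  by rewrite pnatr_eq0 absz_eq0 gt_eqF.
have Ex : x = (numq x)%:~R / d%:R by rewrite -Ed divq_num_den.
have ED : Dn%:R = (Dn %/ d)%:R * d%:R :> rat by rewrite -natrM divnK.
rewrite ED; rewrite [in RHS]Ex.
have -> : ((Dn %/ d)%N%:Z)%:~R = (Dn %/ d)%:R :> rat by [].
by field.
Qed.

Lemma ZintE e : (Zint (entry e))%:~R = Dn%:R * entry e :> rat.
Proof. exact: Zint_ok (dvd_Dn e). Qed.

Definition Rep (i : nat) (v : 'rV[rat]_k.+1) (U : coord -> int) :=
  [/\ forall j, (U (cX j))%:~R = (Dn%:R ^+ i.+1) * v ord0 j :> rat,
      U cE = (Dn%:Z) ^+ i.+1,
      U None = U (cX ord0) - U cE &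
      forall c, `|U c| <= (M0 * S ^ i)%N%:Z].

Lemma U0_bd c : `|U0 c| <= M0%:Z.
Proof.
rewrite -abszE lez_nat /M0; apply: leqW.
exact: (leq_bigmax (F := fun c => `|U0 c|%N) c).
Qed.

Lemma Rep0 : Rep 0 (dv A) U0.
Proof.
split=> //.
- by move=> j; rewrite /= expr1 (ZintE (inr j)).
- by move=> c; rewrite expn0 muln1 U0_bd.
Qed.

Lemma fmapX o U j : fmap o U (cX j) = \sum_(i : 'I_k.+1) U (cX i) * Zint (Mq o i j).
Proof. by rewrite /fmap !big_opt /= !mulr0 !add0r. Qed.

Lemma fmapE o U : fmap o U cE = U cE * Dn%:Z.
Proof.
rewrite /fmap !big_opt /= mulr0 add0r big1 ?addr0 // => i _; by rewrite mulr0.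
Qed.

Lemma fmapN o U : fmap o U None = fmap o U (cX ord0) - fmap o U cE.
Proof. by rewrite /fmap -sumrB; apply: eq_bigr => c' _; rewrite /Nm mulrBr. Qed.

Lemma Rep_step i v U o : Rep i v U -> Rep i.+1 (v *m Mq o) (fmap o U).
Proof.
case=> H1 H2 H3 H4; split.
- move=> j; rewrite fmapX rmorph_sum mxE mulr_sumr; apply: eq_bigr => i' _.
  rewrite rmorphM /= H1 (Zint_ok (dvd_Dn (inl (o, i', j)))) /= !exprS; ring.
- by rewrite fmapE H2 [in RHS]exprSr.
- exact: fmapN.
- move=> c; have := fmap_bound o c H4; rewrite expnS mulnCA [(S * _)%N]mulnC.
  by rewrite [in X in _ <= X]PoszM mulrC.
Qed.

Lemma Rep_flag i v U : Rep i v U -> (U None == 0) = (first_entry v == 1).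
Proof.
case=> H1 H2 H3 _; rewrite H3 subr_eq0 -(eqr_int rat) H1 H2 rmorphXn /=.
have nz : (Dn%:R ^+ i.+1 : rat) != 0 by rewrite expf_neq0 // pnatr_eq0 -lt0n Dn_gt0.
rewrite -{2}[Dn%:R ^+ i.+1]mulr1 (inj_eq (mulfI nz)) //.
Qed.


Section W.
Variable w : seq Sigma.
Local Notation n := (size w).

Definition valT (T : int -> Sym) (c : coord) : int :=
  \sum_(i < n.+1) digs (T (Posz i)).2 c * (B%:Z) ^+ i.
Definition flagsum (T : int -> Sym) : nat :=
  (\sum_(i < n.+1) (T (Posz i)).2 None * B ^ i)%N.

Lemma flagsumE T : (flagsum T)%:Z = valT T None.
Proof.
rewrite /flagsum /valT -natz natr_sum; apply: eq_bigr => i _.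
by rewrite natrM natrX !natz.
Qed.

Lemma sum_digits_lt N (a : nat -> nat) : (forall i, a i < B)%N ->
  (\sum_(i < N) a i * B ^ i < B ^ N)%N.
Proof.
move=> Ha; elim: N => [|N IH]; first by rewrite big_ord0 expn_gt0.
rewrite big_ord_recr /= expnS.
have H1 : (a N * B ^ N <= (B - 1) * B ^ N)%N.
  by rewrite leq_mul2r; apply/orP; right; rewrite leq_subRL ?addn1 ?Ha.
have : (B ^ N + (B - 1) * B ^ N = B * B ^ N)%N.
  by rewrite -{1}[(B ^ N)%N]mul1n -mulnDl addnC subnK.
move=> E; rewrite -E; apply: leq_trans (leq_add IH H1) _.
by [].
Qed.

Lemma flagsum_lt T : (flagsum T < B ^ n.+1)%N.
Proof. have H := @sum_digits_lt n.+1 (fun i => (T (Posz i)).2 None) (fun i => ltn_ord _). exact: H. Qed.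

Lemma flag_val (V : nat) (U zz P : int) : V%:Z = U + zz * P -> `|U| < P -> (V%:Z < P) ->
  (V == 0)%N = (U == 0).
Proof.
move=> E HU HV.
have P0 : 0 < P by apply: le_lt_trans HU.
move: HU; rewrite ltr_norml => /andP [HU1 HU2].
apply/eqP/eqP => H.
- subst V; move: E HV; rewrite /= => E HV.
  have : zz = 0 by nia.
  by move=> Z; rewrite Z mul0r addr0 in E.
- subst U; rewrite add0r in E.
  have : zz = 0 by nia.
  by move=> Z; move: E; rewrite Z mul0r => /eqP; rewrite eqz_nat => /eqP.
Qed.

Lemma UB i : (i <= n.+2)%N -> (M0 * S ^ i < B ^ n.+1)%N.
Proof.
move=> Hi.
apply: (@leq_ltn_trans (M0 * S ^ n.+2)); first by rewrite leq_mul2l leq_pexp2l ?orbT.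
have SB : (S <= B)%N.
  rewrite /B /Bm; apply: leq_trans (leqnSn _); apply: leq_trans (leqnSn _).
  by rewrite -mulnA leq_pmulr // muln_gt0.
have SBe : forall e, (S ^ e <= B ^ e)%N.
  by elim=> [|e IH] //; rewrite !expnS leq_mul.
have E1 : (M0 * S ^ n.+2 = S ^ n * Bm)%N by rewrite /Bm !expnS; ring.
rewrite E1 expnSr.
apply: (@leq_ltn_trans (B ^ n * Bm)); first by rewrite leq_mul2r SBe orbT.
by rewrite ltn_pmul2l ?expn_gt0 // /B ltnS leqnSn.
Qed.

Lemma PoszXn (a b : nat) : ((a ^ b)%N)%:Z = (a%:Z) ^+ b.
Proof. by rewrite -natz natrX natz. Qed.

Lemma fmap_valT o T c :
  \sum_(i < n.+1) fmap o (digs (T (Posz i)).2) c * (B%:Z) ^+ i = fmap o (valT T) c.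
Proof.
transitivity (\sum_(i < n.+1) fmap o (fun c' => digs (T (Posz i)).2 c' * (B%:Z) ^+ i) c).
  by apply: eq_bigr => i _; rewrite fmapZ.
by rewrite /valT; symmetry; exact: fmap_sum.
Qed.

Lemma round q s om ka T c U v i (zz : coord -> int) :
  Cfg c (SW q s om true ka) T 0 ->
  (forall j, (j < n)%N -> (T (Posz j)).1 != None) -> (T (Posz n)).1 = None ->
  (forall c, `|decC (ka c)| <= Cb%:Z) ->
  Rep i v U -> (i < n.+2)%N ->
  (forall c, fmap (q, s, om) (valT T) c + decC (ka c) = fmap (q, s, om) U c + zz c * (B%:Z) ^+ n.+1) ->
  exists T', Cfg (iter n.+1 (@tm_step _ TM) c)
     (endst q s om (first_entry (v *m Mq (q, s, om)) == 1)) T' (Posz n - 1) /\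
   (forall z, (T' z).1 = (T z).1) /\
   (exists zf : coord -> int, forall c, valT T' c = fmap (q, s, om) U c + zf c * (B%:Z) ^+ n.+1).
Proof.
move=> Hc Hmk Hn Hka HR Hi Hval.
have [T' [kf [H1 [H2 [H3 H4]]]]] := @sweep n q s om n 0 true ka T c (erefl _) Hc
  (fun j Hj => Hmk j Hj) Hn Hka.
have Ev : forall c, valT T' c = fmap (q, s, om) U c + (zz c - kf c) * (B%:Z) ^+ n.+1.
  move=> c0; have E4 : valT T' c0 + kf c0 * (B%:Z) ^+ n.+1 =
      \sum_(i < n.+1) fmap (q, s, om) (digs (T (Posz i)).2) c0 * (B%:Z) ^+ i + decC (ka c0)
    := H4 c0.
  rewrite fmap_valT Hval in E4.
  by rewrite mulrBl addrA -E4; ring.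
exists T'; split; [|split] => //; last by exists (fun c0 => zz c0 - kf c0).
have EF : ((\sum_(i < n.+1) (T' (Posz (0 + i))).2 None * B ^ i)%N == 0%N) = (flagsum T' == 0%N)
  by [].
rewrite EF /= in H1.
have HR' := Rep_step (q, s, om) HR.
rewrite -(Rep_flag HR').
rewrite (@flag_val (flagsum T') (fmap (q, s, om) U None) (zz None - kf None) ((B%:Z) ^+ n.+1)) in H1 => //.
- by rewrite flagsumE Ev.
- case: HR' => _ _ _ /(_ None) Hb; apply: (le_lt_trans Hb).
  by rewrite -PoszXn ltz_nat UB.
- by rewrite -PoszXn ltz_nat flagsum_lt.
Qed.



Lemma stepE' c s T p : Cfg c s T p -> ~~ halting (M := TM) s ->
  Cfg (tm_step c) (del s (T p)).1.1 (fun z => if z == p then (del s (T p)).1.2 else T z)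
      (p + move_int (del s (T p)).2).
Proof. by move=> Hc Hh; case Hd: (del s (T p)) => [[s' y] mv]; apply: stepE Hc Hh Hd. Qed.

Definition MG (T : int -> Sym) := [/\ (T (-1)).1 = None, (T (Posz n)).1 = None &
  forall j, (j < n)%N -> (T (Posz j)).1 != None].

Definition stok (s : St) (p : int) : bool :=
  match s with SW _ _ _ _ _ | FD _ _ => 0 <= p | RW _ _ _ => p < Posz n | _ => true end.

Definition GI (c : config TM) := exists T p,
  [/\ Cfg c (cstate c) T p, -1 <= p <= Posz n, MG T & stok (cstate c) p].

Lemma MG_upd T p (y : Sym) : MG T -> (y.1 = (T p).1 \/ (y.1 != None /\ 0 <= p < Posz n)) ->
  MG (fun z => if z == p then y else T z).
Proof.
case=> H1 H2 H3 Hy; split.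
- have [E|_] := eqVneq (-1) p => //=; case: Hy => [->|[_ Hp]]; first by rewrite -E.
  by move: Hp; rewrite -E.
- have [E|_] := eqVneq (Posz n) p => //=; case: Hy => [->|[_ Hp]]; first by rewrite -E.
  by move: Hp; rewrite -E ltxx andbF.
- move=> j Hj; have [E|_] := eqVneq (Posz j) p => //=; last exact: H3.
  case: Hy => [->|[]] //; rewrite -E; exact: H3.
Qed.

Lemma pos_none T p : MG T -> -1 <= p <= Posz n -> (T p).1 = None -> p = -1 \/ p = Posz n.
Proof.
case=> H1 H2 H3; case: p => [j|j] Hp Hn; last first.
  by left; move: Hp; case: j {Hn} => //.
right; have : ~~ (j < n)%N by apply/negP => Hj; move: (H3 j Hj); rewrite Hn.
by rewrite -leqNgt => Hj; move: Hp; rewrite lez_nat => /andP [_ H]; congr Posz; apply/eqP; rewrite eqn_leq H Hj.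
Qed.

Lemma pos_some T p : MG T -> -1 <= p <= Posz n -> (T p).1 != None -> 0 <= p < Posz n.
Proof.
move=> HM Hp Hs; case: (HM) => H1 H2 H3.
have : p != -1 by apply/eqP => E; move: Hs; rewrite E H1.
have : p != Posz n by apply/eqP => E; move: Hs; rewrite E H2.
move: Hp; lia.
Qed.

Lemma GI_of c s T p : Cfg c s T p -> -1 <= p <= Posz n -> MG T -> stok s p -> GI c.
Proof. by move=> Hc Hp HM Hs; exists T, p; case: (Hc) => E _; rewrite E. Qed.

Lemma GI_step c : GI c -> GI (tm_step c).
Proof.
case=> T [p [Hc Hp HM Hs]].
case Hh: (halting (M := TM) (cstate c)).
  by rewrite (stepH Hc Hh); exists T, p.
have Hc' := stepE' Hc (negbT Hh).
case HT: (T p) Hc' => [mk ds] Hc'.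
have [H1 H2 H3] := HM.
have Pn : (T p).1 = None -> p = -1 \/ p = Posz n by apply: pos_none.
have Ps : (T p).1 != None -> 0 <= p < Posz n by apply: pos_some.
rewrite HT /= in Pn Ps.
move: Hs Hc' Hh; case: (cstate c) => [q s om fl ka|q fl nx|q fl||] //= Hs Hc' _.
- case: mk HT Pn Ps Hc' => [mk|] HT Pn Ps Hc'.
  + have [Hp0 Hpn] := andP (Ps isT).
    apply: (GI_of Hc'); [rewrite /=; lia| |by rewrite /=; lia].
    by apply: MG_upd => //; left; rewrite HT.
  + have Ep : p = Posz n by case: (Pn erefl) => // E; move: Hs; rewrite E.
    apply: (GI_of Hc'); [rewrite /=; lia| |].
    * by apply: MG_upd => //; left; rewrite HT.
    * rewrite /endst; case: ifP => _; last by rewrite /=; lia.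
      by case: ifP.
- case: mk HT Pn Ps Hc' => [mk|] HT Pn Ps Hc'.
  + have [Hp0 Hpn] := andP (Ps isT).
    apply: (GI_of Hc'); [rewrite /=; lia| |by rewrite /=; lia].
    by apply: MG_upd => //; left; rewrite HT.
  + have Ep : p = -1 by case: (Pn erefl) => // E; move: Hs; rewrite E ltxx.
    apply: (GI_of Hc'); [rewrite /=; lia| |].
    * by apply: MG_upd => //; left; rewrite HT.
    * case: nx {Hc'} => [s|] /=; lia.
- case: mk HT Pn Ps Hc' => [[a|]|] HT Pn Ps Hc'.
  + have [Hp0 Hpn] := andP (Ps isT).
    apply: (GI_of Hc'); [rewrite /=; lia| |by rewrite /=; lia].
    by apply: MG_upd => //; right; split => //; apply/andP.
  + have [Hp0 Hpn] := andP (Ps isT).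
    apply: (GI_of Hc'); [rewrite /=; lia| |by rewrite /=; lia].
    by apply: MG_upd => //; left; rewrite HT.
  + have Ep : p = Posz n by case: (Pn erefl) => // E; move: Hs; rewrite E.
    apply: (GI_of Hc'); [rewrite /=; lia| |by rewrite /=; lia].
    by apply: MG_upd => //; left; rewrite HT.
Qed.


Definition lt (j : nat) : option Sigma := nth None (map Some w) j.

Definition mkf (m : nat) (z : int) : code :=
  match z with
  | Posz j => if (j < n)%N then (if (j < m)%N then Some None else Some (lt j)) else None
  | Negz _ => None end.

Lemma lt_some j : (j < n)%N -> exists x, lt j = Some x.
Proof.
rewrite /lt; case: w => [//|a w'] Hj; exists (nth a (a :: w') j).
by rewrite (nth_map a).
Qed.

Lemma lt_none : lt n = None.
Proof. by rewrite /lt nth_default // size_map. Qed.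

Lemma mkf_MG m (T : int -> Sym) : (forall z, (T z).1 = mkf m z) -> MG T.
Proof.
move=> H; split; rewrite ?H //=; first by rewrite ltnn.
by move=> j Hj; rewrite H /= Hj; case: ifP.
Qed.

Definition T0 (z : int) : Sym := ctape (tm_init TM w) ord0 z.

Lemma T0_mk z : (T0 z).1 = mkf 0 z.
Proof.
rewrite /T0 /=; case: z => [j|j] //=.
case: ifP => // Hj; have [x Hx] := lt_some Hj.
by move: Hx; rewrite /lt => ->.
Qed.

Lemma T0_dg z : (T0 z).2 = zd.
Proof.
rewrite /T0 /=; case: z => [j|j] //=.
by case: ifP => // Hj; case: (nth None (map Some w) j).
Qed.

Lemma valT0 c : valT T0 c = 0.
Proof.
by rewrite /valT big1 // => i _; rewrite T0_dg /digs ffunE mul0r.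
Qed.

Lemma init_cfg : Cfg (tm_run TM w 0) st0 T0 0.
Proof. by split=> //; split=> // i z; rewrite (ord1 i). Qed.

Lemma fmap0 o c : fmap o (fun=> 0) c = 0.
Proof. by rewrite /fmap big1 // => c' _; rewrite mul0r. Qed.

Definition dvacfg (m : nat) : dQ A * 'rV[rat]_k.+1 :=
  foldl (@dva_step _ _ A) (dq0 A, dv A) (Cent :: take m (map (@Letter Sigma) w)).

Lemma dva_stepE (p : dQ A * 'rV[rat]_k.+1) s :
  dva_step p s = ((ddelta p.1 s (first_entry p.2 == 1)).1,
                  p.2 *m (ddelta p.1 s (first_entry p.2 == 1)).2).
Proof. by case: p => q v; rewrite /dva_step; case: ddelta. Qed.

Lemma dvacfgS m x : (m < n)%N -> lt m = Some x ->
  dvacfg m.+1 = dva_step (dvacfg m) (Letter x).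
Proof.
rewrite /dvacfg /lt; case: w => [//|a w'] Hm Hx.
rewrite (take_nth (Letter a)) ?size_map // -rcons_cons foldl_rcons.
by rewrite (nth_map a) //; move: Hx; rewrite (nth_map a) // => [[->]].
Qed.

Lemma dvacfg_run : dva_run A w = dva_step (dvacfg n) Dollar.
Proof.
by rewrite /dva_run /dvacfg take_oversize ?size_map // -rcons_cons foldl_rcons.
Qed.

Lemma Tfd_mk m (T : int -> Sym) : (m < n)%N -> (forall z, (T z).1 = mkf m z) ->
  forall z, (Tfd T m (lt m) z).1 = mkf m.+1 z.
Proof.
move=> Hm H z; have [x Hx] := lt_some Hm.
rewrite /Tfd; have [->|NE] := eqVneq z (Posz m).
  by rewrite Hx /= Hm ltnSn.
rewrite H; case: z NE => [j|j] //= NE.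
case: ifP => // Hj.
have Hjm : (j < m.+1)%N = (j < m)%N.
  rewrite ltnS leq_eqVlt.
  have -> : (j == m) = false by apply/eqP => E; move: NE; rewrite E eqxx.
  by [].
by rewrite Hjm.
Qed.

Lemma Tfd_dg T m a z : (Tfd T m a z).2 = (T z).2.
Proof. by rewrite /Tfd; case: eqP => //; case: a. Qed.

Lemma valT_Tfd T m a c : valT (Tfd T m a) c = valT T c.
Proof. by apply: eq_bigr => i _; rewrite Tfd_dg. Qed.


Lemma tm_runD a t : tm_run TM w (a + t) = iter a (@tm_step _ TM) (tm_run TM w t).
Proof. by rewrite /tm_run iterD. Qed.

Lemma loop m : (m <= n)%N -> exists t T U (zz : coord -> int),
 [/\ (t <= (4 * m + 2) * n.+1)%N,
     Cfg (tm_run TM w t) (FD (dvacfg m).1 (first_entry (dvacfg m).2 == 1)) T 0,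
     (forall z, (T z).1 = mkf m z), Rep m.+1 (dvacfg m).2 U &
     (forall c, valT T c = U c + zz c * (B%:Z) ^+ n.+1)].
Proof.
elim: m => [_|m IH Hm].
- have Hc := init_cfg.
  set ka : {ffun coord -> 'I_Kc} := [ffun c => encC (fmap o0 U0 c)].
  have Hb : forall c, `|fmap o0 U0 c| <= Cb%:Z.
    move=> c; apply: (le_trans (fmap_bound o0 c U0_bd)).
    by rewrite /Cb PoszM mulrC.
  have Hka : forall c, `|decC (ka c)| <= Cb%:Z by move=> c; rewrite ffunE decCK.
  have [H1 H2 H3] := mkf_MG T0_mk.
  have Hval : forall c, fmap o0 (valT T0) c + decC (ka c) = fmap o0 U0 c + (fun=> 0) c * (B%:Z) ^+ n.+1.
    move=> c; rewrite ffunE decCK // mul0r addr0 (fmap_ext _ _ valT0) fmap0 add0r //.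
  have [T1 [Hc1 [Hmk1 [zf Hv1]]]] := @round (dq0 A) None om0 ka T0 (tm_run TM w 0) U0 (dv A) 0 (fun=> 0)
     Hc H3 H2 Hka Rep0 (erefl _) Hval.
  rewrite /endst /= in Hc1.
  have N1 : forall j, (j < n)%N -> (T1 (Posz j)).1 != None by move=> j Hj; rewrite Hmk1 T0_mk /= Hj.
  have N2 : (T1 (-1)).1 = None by rewrite Hmk1 T0_mk.
  have Hc2 := rewind Hc1 N1 N2.
  have E0 : dvacfg 0 = ((ddelta (dq0 A) Cent om0).1, dv A *m (ddelta (dq0 A) Cent om0).2).
    rewrite /dvacfg take0; exact: (dva_stepE (dq0 A, dv A) Cent).
  exists (n.+1 + n.+1)%N, T1, (fmap o0 U0), zf; rewrite E0; split.
  + by rewrite mul2n addnn.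
  + by rewrite tm_runD.
  + by move=> z; rewrite Hmk1 T0_mk.
  + exact: (Rep_step o0 Rep0).
  + exact: Hv1.
- have Hmn : (m < n)%N by [].
  have [t [T [U [zz [Ht Hc Hmk HR Hv]]]]] := IH (ltnW Hm).
  have [x Hx] := lt_some Hmn.
  set q := (dvacfg m).1 in Hc; set v := (dvacfg m).2 in Hc HR; set fl := (first_entry v == 1) in Hc.
  have Hdone : forall j, (j < m)%N -> (T (Posz j)).1 = Some None.
    by move=> j Hj; rewrite Hmk /= (ltn_trans Hj Hmn) Hj.
  have Hmark : (T (Posz m)).1 = markOf (lt m) by rewrite Hmk /= Hmn ltnn Hx.
  have Hf := find Hdone Hmark (add0n m) Hc.
  have Hmk2 := Tfd_mk Hmn Hmk.
  set T2 := Tfd T m (lt m) in Hf Hmk2.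
  have N1 : forall j, (j < m)%N -> (T2 (Posz j)).1 != None.
    by move=> j Hj; rewrite Hmk2 /= (ltn_trans Hj Hmn) ltnS (ltnW Hj).
  have N2 : (T2 (-1)).1 = None by rewrite Hmk2.
  have Hr := rewind Hf N1 N2.
  set o : Op := (q, Some (lt m), fl).
  have Hka : forall c, `|decC (([ffun=> encC 0] : {ffun coord -> 'I_Kc}) c)| <= Cb%:Z.
    by move=> c; rewrite ffunE decCK ?normr0.
  have N3 : forall j, (j < n)%N -> (T2 (Posz j)).1 != None.
    by move=> j Hj; rewrite Hmk2 /= Hj; case: ifP.
  have N4 : (T2 (Posz n)).1 = None by rewrite Hmk2 /= ltnn.
  have Hval : forall c, fmap o (valT T2) c + decC (([ffun=> encC 0] : {ffun coord -> 'I_Kc}) c)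
              = fmap o U c + fmap o zz c * (B%:Z) ^+ n.+1.
    move=> c; rewrite ffunE decCK ?normr0 // addr0.
    rewrite (fmap_ext _ _ (fun c' => valT_Tfd T m (lt m) c')).
    by rewrite (fmap_ext _ _ Hv) fmapD fmapZ.
  have Hi : (m.+1 < n.+2)%N by rewrite ltnS ltnW.
  have [T3 [Hc3 [Hmk3 [zf Hv3]]]] := round Hr N3 N4 Hka HR Hi Hval.
  rewrite /endst Hx /= in Hc3.
  have N5 : forall j, (j < n)%N -> (T3 (Posz j)).1 != None by move=> j Hj; rewrite Hmk3; exact: N3.
  have N6 : (T3 (-1)).1 = None by rewrite Hmk3.
  have Hc4 := rewind Hc3 N5 N6.
  have E1 : dvacfg m.+1 = ((ddelta q (Letter x) fl).1, v *m (ddelta q (Letter x) fl).2).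
    by rewrite (dvacfgS Hmn Hx) dva_stepE.
  exists (n.+1 + (n.+1 + (m.+1 + (m.+1 + t))))%N, T3, (fmap o U), zf; rewrite E1; split.
  + move: Ht Hm; rewrite !mulnDl -!addnA; nia.
  + rewrite !tm_runD; exact: Hc4.
  + by move=> z; rewrite Hmk3 Hmk2.
  + by have := Rep_step o HR; rewrite /o Hx.
  + by move: Hv3; rewrite /o Hx.
Qed.


Lemma Tfd_none T m z : Tfd T m None z = T z.
Proof. by rewrite /Tfd; case: eqP. Qed.

Lemma final : exists t, [/\ (t <= (4 * n + 5) * n.+1)%N,
  halting (cstate (tm_run TM w t)) &
  (cstate (tm_run TM w t) = HA <-> dva_lang A w)].
Proof.
have [t [T [U [zz [Ht Hc Hmk HR Hv]]]]] := loop (leqnn n).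
set q := (dvacfg n).1 in Hc; set v := (dvacfg n).2 in Hc HR; set fl := (first_entry v == 1) in Hc.
have Hdone : forall j, (j < n)%N -> (T (Posz j)).1 = Some None.
  by move=> j Hj; rewrite Hmk /= Hj.
have Hmark : (T (Posz n)).1 = markOf None by rewrite Hmk /= ltnn.
have Hf := find Hdone Hmark (add0n n) Hc.
have N1 : forall j, (j < n)%N -> (Tfd T n None (Posz j)).1 != None.
  by move=> j Hj; rewrite Tfd_none Hmk /= Hj.
have N2 : (Tfd T n None (-1)).1 = None by rewrite Tfd_none Hmk.
have Hr := rewind Hf N1 N2.
set o : Op := (q, Some None, fl).
have Hka : forall c, `|decC (([ffun=> encC 0] : {ffun coord -> 'I_Kc}) c)| <= Cb%:Z.
  by move=> c; rewrite ffunE decCK ?normr0.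
have N3 : forall j, (j < n)%N -> (Tfd T n None (Posz j)).1 != None by [].
have N4 : (Tfd T n None (Posz n)).1 = None by rewrite Tfd_none Hmk /= ltnn.
have Hval : forall c, fmap o (valT (Tfd T n None)) c + decC (([ffun=> encC 0] : {ffun coord -> 'I_Kc}) c)
            = fmap o U c + fmap o zz c * (B%:Z) ^+ n.+1.
  move=> c; rewrite ffunE decCK ?normr0 // addr0.
  rewrite (fmap_ext _ _ (fun c' => valT_Tfd T n None c')).
  by rewrite (fmap_ext _ _ Hv) fmapD fmapZ.
have Hi : (n.+1 < n.+2)%N by [].
have [T3 [Hc3 _]] := round Hr N3 N4 Hka HR Hi Hval.
rewrite /endst /= in Hc3.
exists (n.+1 + (n.+1 + (n.+1 + t)))%N; split.
- move: Ht; rewrite !mulnDl; nia.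
- rewrite !tm_runD; case: Hc3 => -> _.
  by case: ifP.
- rewrite !tm_runD; case: Hc3 => -> _.
  rewrite /dva_lang dvacfg_run dva_stepE /=.
  case: ifP => H; split => //.
  + by case/andP: H => H1 /eqP.
  + by case=> H1 H2; move: H; rewrite H1 H2 eqxx.
Qed.

Lemma GI_run t : GI (tm_run TM w t).
Proof.
elim: t => [|t IH].
- apply: (GI_of init_cfg) => //; exact: (mkf_MG T0_mk).
- by rewrite /tm_run iterS; apply: GI_step.
Qed.

Lemma space t i : (`|cpos (tm_run TM w t) i| <= 20 * n + 20)%N.
Proof.
have [T [p [[_ [Hp _]] Hb _ _]]] := GI_run t.
rewrite Hp; move: Hb; lia.
Qed.

End W.
End Sim.

Theorem theorem8 (Sigma : finType) (k : nat) (A : rtDVA Sigma k.+1) :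
  TISP_n3_n (dva_lang A).
Proof.
exists (TM A), 20%N => w.
have [t [Ht Hh Hacc]] := final A w.
exists t; split; [|split; [exact: Hh|split; [exact: Hacc|]]].
- apply: (leq_trans Ht); rewrite !expnS expn0; nia.
- by move=> t' i _; apply: space.
Qed.
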